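(* Every path-restricted ordered bipartite graph $G=(U,V,E)$ has at most $n\log n+O(n)$ edges, where $n=|U|+|V|$. Moreover the bound is tight up to constant factors: for infinitely many $n$ there exists a path-restricted ordered bipartite graph on $n$ vertices with $\Omega(n\log n)$ edges.
   Context: $\log$ denotes the binary logarithm. An ordered bipartite graph is $G=(U,V,E)$ where $U,V$ are disjoint finite sets, each carrying a strict total order (both written $<$), and $E\subseteq U\times V$. A path is a sequence of edges in which consecutive edges share a vertex. A path visiting the vertices of $U$ in the order $u_1,\dots,u_k$ and those of $V$ in the order $v_1,\dots,v_l$ is a forward path if either $u_1<\dots<u_k$ and $v_1<\dots<v_l$, or $u_1>\dots>u_k$ and $v_1>\dots>v_l$. For $x\le y$ in $U$ write $\langle x,y\rangle=\{u\in U: x\le u\le y\}$, and similarly in $V$. If $u_a<u_b$ are the smallest and largest $U$-vertices and $v_c<v_d$ the smallest and largest $V$-vertices of a forward path $P$, the range of $P$ is $\{\langle u_a,u_b\rangle,\langle v_c,v_d\rangle\}$. A vertex of $P$ is non-terminal if it is adjacent along $P$ to two vertices of $P$. An edge is a back edge to $P$ if either it is $(u_a,v_j)$ with $v_j\in\langle v_c,v_d\rangle$ and $v_j>v'$ for some non-terminal vertex $v'\in V$ of $P$, or it is $(u_i,v_c)$ with $u_i\in\langle u_a,u_b\rangle$ and $u_i>u'$ for some non-terminal vertex $u'\in U$ of $P$. $G$ is a path-restricted ordered bipartite graph (PRBG) if no forward path in $G$ has a back edge in $E$. *)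

(* Defs.v *)
From Stdlib Require Import Reals.
From mathcomp Require Import all_boot.
Set Implicit Arguments. Unset Strict Implicit. Unset Printing Implicit Defensive.

(* An ordered bipartite graph: U = 'I_p, V = 'I_q (each with its natural
   strict total order), E a set of pairs (u, v) in U x V.  Any finite totally
   ordered set is order-isomorphic to an ordinal, so this is no loss. *)

Definition vtx (p q : nat) := ('I_p + 'I_q)%type.

Definition adjb p q (E : {set 'I_p * 'I_q}) (x y : vtx p q) : bool :=
  match x, y with
  | inl u, inr v => (u, v) \in E
  | inr v, inl u => (u, v) \in E
  | _, _ => false
  end.

(* A path, given by the sequence of vertices it traverses (consecutive edges
   e_i = {w_(i-1), w_i} share the vertex w_i); at least one edge. *)
Definition is_walk p q (E : {set 'I_p * 'I_q}) (w : seq (vtx p q)) : bool :=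
  match w with
  | x :: s => (0 < size s) && path (adjb E) x s
  | [::] => false
  end.

Definition Uvs p q (w : seq (vtx p q)) : seq 'I_p :=
  pmap (fun x => if x is inl u then Some u else None) w.
Definition Vvs p q (w : seq (vtx p q)) : seq 'I_q :=
  pmap (fun x => if x is inr v then Some v else None) w.

Definition forward p q (w : seq (vtx p q)) : bool :=
  (sorted (fun a b : 'I_p => a < b) (Uvs w) && sorted (fun a b : 'I_q => a < b) (Vvs w))
  || (sorted (fun a b : 'I_p => b < a) (Uvs w) && sorted (fun a b : 'I_q => b < a) (Vvs w)).

Definition is_min n (s : seq 'I_n) (x : 'I_n) : Prop :=
  x \in s /\ forall y, y \in s -> x <= y.
Definition is_max n (s : seq 'I_n) (x : 'I_n) : Prop :=
  x \in s /\ forall y, y \in s -> y <= x.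

(* non-terminal vertices: those adjacent along the path to two vertices of it,
   i.e. all but the first and the last vertex of the walk *)
Definition interior T (w : seq T) : seq T := behead (take (size w).-1 w).

Definition back_edge p q (w : seq (vtx p q)) (e : 'I_p * 'I_q) : Prop :=
  (exists ua vc vd v',
      is_min (Uvs w) ua /\ is_min (Vvs w) vc /\ is_max (Vvs w) vd /\
      e.1 = ua /\ vc <= e.2 <= vd /\
      inr v' \in interior w /\ v' < e.2)
  \/
  (exists vc ua ub u',
      is_min (Vvs w) vc /\ is_min (Uvs w) ua /\ is_max (Uvs w) ub /\
      e.2 = vc /\ ua <= e.1 <= ub /\
      inl u' \in interior w /\ u' < e.1).

Definition PRBG p q (E : {set 'I_p * 'I_q}) : Prop :=
  forall w : seq (vtx p q), is_walk E w -> forward w ->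
  forall e, e \in E -> ~ back_edge w e.

Definition log2 (x : R) : R := Rdiv (ln x) (ln 2).

(* Main.v *)
Require Import Defs.
From Stdlib Require Import Reals Lra.
From mathcomp Require Import all_boot zify.
Set Implicit Arguments. Unset Strict Implicit. Unset Printing Implicit Defensive.


Definition ed k u v s : bool :=
  [&& s <= k, 2 * (u %% 2^s) < 2^s, u %% 2^s == v %% 2^s & u %/ 2^s + v %/ 2^s + 1 == 2^(k-s)].

Lemma expn2_gt0 n : 0 < 2 ^ n.
Proof. by rewrite expn_gt0. Qed.

Lemma ed_sym k u v s : ed k u v s = ed k v u s.
Proof.
rewrite /ed; apply/and4P/and4P => -[h1 h2 /eqP h3 /eqP h4]; split => //;
  rewrite ?h3 ?(esym h3) //; apply/eqP; lia.
Qed.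

Lemma ed_comp k u v s L : ed k u v s -> s <= L -> L <= k ->
  u %/ 2^L + v %/ 2^L + 1 = 2^(k-L).
Proof.
move=> /and4P [hsk hr hm /eqP hq] hsL hLk.
have e1 : 2^L = 2^s * 2^(L-s) by rewrite -expnD subnKC.
have e2 : 2^(k-s) = 2^(L-s) * 2^(k-L) by rewrite -expnD; congr expn; lia.
rewrite e1 !divnMA; rewrite e2 in hq.
move: hq; set a := u %/ 2^s; set b := v %/ 2^s; set D := 2^(L-s); set M := 2^(k-L) => hq.
have hD : 0 < D by apply: expn2_gt0.
have ea := divn_eq a D; have eb := divn_eq b D.
have ra := ltn_pmod a hD; have rb := ltn_pmod b hD.
move: (a %/ D) (b %/ D) (a %% D) (b %% D) ea eb ra rb => qa qb xa xb ea eb ra rb.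
clearbody a b D M; subst a b; clear -hq ra rb hD.
case: (ltngtP M (qa + qb + 1)) => h.
- have : D * M <= D * (qa + qb) by rewrite leq_pmul2l //; lia.
  rewrite !mulnDr; move: hq; rewrite ![_ * D]mulnC.
  move: (D * M) (D * qa) (D * qb) => x y z; lia.
- have : D * (qa + qb + 2) <= D * M by rewrite leq_pmul2l //; lia.
  rewrite !mulnDr; move: hq; rewrite ![_ * D]mulnC.
  move: (D * M) (D * qa) (D * qb) => x y z; lia.
- by [].
Qed.

Lemma split_div x L : x %/ 2^L = 2 * (x %/ 2^L.+1) + (x %% 2^L.+1) %/ 2^L.
Proof.
have h := divn_eq x (2^L.+1).
move: (x %/ 2^L.+1) (x %% 2^L.+1) h => a b ->.
by rewrite expnS mulnA divnMDl ?expn2_gt0 // mulnC.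
Qed.

Lemma expS_sub k L : L < k -> 2^(k-L) = 2 * 2^(k-L.+1).
Proof. move=> h; rewrite -expnS; congr expn; lia. Qed.

Lemma ed_conv k u v s L : ed k u v s -> L < k -> u %/ 2^L + v %/ 2^L + 1 = 2^(k-L) -> s <= L.
Proof.
move=> /and4P [hsk hr /eqP hm hq] hLk hc.
rewrite leqNgt; apply/negP => hLs.
have hdv : 2^L.+1 %| 2^s by apply: dvdn_exp2l.
have hmod : u %% 2^L.+1 = v %% 2^L.+1.
  by rewrite -(modn_dvdm u hdv) -(modn_dvdm v hdv) hm.
rewrite (split_div u) (split_div v) hmod in hc.
have e2 := expS_sub hLk.
rewrite e2 in hc; clear -hc.
move: (u %/ 2^L.+1) (v %/ 2^L.+1) ((v %% 2^L.+1) %/ 2^L) (2^(k-L.+1)) hc => a b c d; lia.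
Qed.

Lemma ed_even k u v t : ed k u v t.+1 -> u %/ 2^t = 2 * (u %/ 2^t.+1).
Proof.
move=> /and4P [_ hr _ _]; rewrite (split_div u t) (@divn_small (u %% 2^t.+1)) ?addn0 //.
rewrite expnS in hr *; clear -hr; move: (u %% (2 * 2^t)) (2^t) hr => a b; lia.
Qed.

Lemma ed_move k u u' v s1 s2 : ed k u v s1 -> ed k u' v s2 -> s2 < s1 -> u < u'.
Proof.
case: s1 => // t h1 h2 hlt.
have hk : t < k by move: h1 => /and4P [h _ _ _].
have c2 := ed_comp h2 hlt (ltnW hk).
have ev1 := ed_even h1; rewrite ed_sym in h1; have ev2 := ed_even h1.
move: h1 => /and4P [_ _ _ /eqP hq].
have e2 := expS_sub hk.
rewrite e2 ev2 in c2.
have : u %/ 2^t < u' %/ 2^t.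
  rewrite ev1; clear -c2 hq.
  move: (u %/ 2^t.+1) (v %/ 2^t.+1) (u' %/ 2^t) (2^(k - t.+1)) c2 hq => a b c d; lia.
rewrite ltnNge; apply: contraNT; rewrite -leqNgt => h; exact: leq_div2r.
Qed.

Lemma ed_uniq k u v v' s : ed k u v s -> ed k u v' s -> v = v'.
Proof.
move=> /and4P [_ _ /eqP m1 /eqP q1] /and4P [_ _ /eqP m2 /eqP q2].
rewrite (divn_eq v (2^s)) (divn_eq v' (2^s)) -m1 -m2.
have -> : v %/ 2^s = v' %/ 2^s.
  by clear -q1 q2; move: (u %/ 2^s) (v %/ 2^s) (v' %/ 2^s) (2^(k-s)) q1 q2 => a b c d; lia.
by [].
Qed.

Lemma ed_order k u u' v s1 s2 : ed k u v s1 -> ed k u' v s2 -> u < u' -> s2 < s1.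
Proof.
move=> h1 h2 hu; case: (ltngtP s2 s1) => // h.
- by have := ed_move h2 h1 h; rewrite ltnNge (ltnW hu).
- subst; rewrite ed_sym in h1; rewrite ed_sym in h2.
  by move: hu; rewrite (ed_uniq h1 h2) ltnn.
Qed.

Lemma ed_lt k u v s : ed k u v s -> u < 2^k.
Proof.
move=> /and4P [hsk _ _ /eqP hq].
have e : 2^k = 2^(k-s) * 2^s by rewrite -expnD subnK.
rewrite e -ltn_divLR ?expn2_gt0 //; clear -hq.
move: (u %/ 2^s) (v %/ 2^s) (2^(k-s)) hq => a b c; lia.
Qed.

Lemma ed_step k u u' v s1 s2 t : ed k u v s1 -> ed k u' v s2 -> u < u' -> t < k ->
  u %/ 2^t + v %/ 2^t + 1 = 2^(k-t) -> u' %/ 2^t + v %/ 2^t + 1 = 2^(k-t).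
Proof.
move=> h1 h2 hu hk hc.
have hs1 := ed_conv h1 hk hc.
have hs2 := ed_order h1 h2 hu.
exact: (ed_comp h2 (leq_trans (ltnW hs2) hs1) (ltnW hk)).
Qed.

Lemma core_arith k a b1 x t sx : ed k a b1 t.+1 -> ed k a x sx -> b1 < x ->
  x %/ 2^t = b1 %/ 2^t -> False.
Proof.
move=> h1 h2 hbx hq.
have hk : t < k by move: h1 => /and4P [h _ _ _].
case: (leqP sx t) => hs.
- have c := ed_comp h2 hs (ltnW hk).
  have ev1 := ed_even h1; rewrite ed_sym in h1; have ev2 := ed_even h1.
  move: h1 => /and4P [_ _ _ /eqP hq2].
  rewrite hq ev1 ev2 (expS_sub hk) in c; clear -c hq2.
  move: (a %/ 2^t.+1) (b1 %/ 2^t.+1) (2^(k-t.+1)) c hq2 => a' b' d; lia.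
- rewrite ed_sym in h1; rewrite ed_sym in h2.
  have := ed_order h1 h2 hbx; rewrite ltnNge; move/negP; apply; exact: hs.
Qed.

Lemma ed_suniq k u v s s' : ed k u v s -> ed k u v s' -> s = s'.
Proof.
wlog hss : s s' / s <= s'.
  move=> H h1 h2; case: (leqP s s') => h; first exact: H.
  by apply/esym; apply: H => //; apply: ltnW.
move=> h1 h2; move: hss; rewrite leq_eqVlt => /orP [/eqP //|hlt].
have hk : s < k by move: h2 => /and4P [h _ _ _]; apply: leq_trans h.
have c := ed_comp h1 (leqnn s) (ltnW hk).
have := ed_conv h2 hk c; rewrite leqNgt hlt; by [].
Qed.

Lemma eq_canc (x y z d : nat) : x + y + 1 = d -> z + y + 1 = d -> z = x.
Proof. lia. Qed.
Lemma eq_canc2 (x y z d : nat) : x + y + 1 = d -> z + x + 1 = d -> z = y.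
Proof. lia. Qed.

Definition ltside p q (x y : vtx p q) : bool :=
  match x, y with
  | inl u, inl u' => u < u'
  | inr v, inr v' => v < v'
  | _, _ => false
  end.

Definition inc p q (w : seq (vtx p q)) : bool :=
  sorted (fun a b : 'I_p => a < b) (Uvs w) && sorted (fun a b : 'I_q => a < b) (Vvs w).

Lemma inc_tail p q (x : vtx p q) s : inc (x :: s) -> inc s.
Proof.
by case: x => [u|v]; rewrite /inc /Uvs /Vvs /= => /andP [h1 h2]; apply/andP; split => //;
  apply: path_sorted; eassumption.
Qed.

Lemma inc_lt3 p q (E : {set 'I_p * 'I_q}) (x y z : vtx p q) s :
  adjb E x y -> adjb E y z -> inc (x :: y :: z :: s) -> ltside x z.
Proof.
case: x => [u|v]; case: y => [u1|v1] //=; case: z => [u2|v2] //= _ _;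
  rewrite /inc /Uvs /Vvs /= => /andP [h1 h2].
- by move: h1 => /andP [].
- by move: h2 => /andP [].
Qed.

Lemma walk_all p q (E : {set 'I_p * 'I_q}) (P : pred (vtx p q)) :
  (forall a b c, adjb E a b -> adjb E b c -> ltside a c -> P a -> P b -> P c) ->
  forall r x y, adjb E x y -> path (adjb E) y r -> inc (x :: y :: r) -> P x -> P y ->
  all P (x :: y :: r).
Proof.
move=> HP; elim=> [|z r IH] x y hxy hp hi hx hy; first by rewrite /= hx hy.
move: hp => /= /andP [hyz hp].
have hz := HP _ _ _ hxy hyz (inc_lt3 hxy hyz hi) hx hy.
have := IH y z hyz hp (inc_tail hi) hy hz.
by rewrite /= hx => ->.
Qed.

Lemma mem_Vvs p q (w : seq (vtx p q)) v : (v \in Vvs w) = (inr v \in w).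
Proof. by elim: w => [|[u|v'] w IH] //=; rewrite inE IH. Qed.

Lemma mem_Uvs p q (w : seq (vtx p q)) u : (u \in Uvs w) = (inl u \in w).
Proof. by elim: w => [|[u'|v'] w IH] //=; rewrite inE IH. Qed.

Lemma sorted_head n (a : 'I_n) l y :
  sorted (fun a b : 'I_n => a < b) (a :: l) -> y \in a :: l -> a <= y.
Proof.
move=> /= hp; rewrite inE => /orP [/eqP -> //|hy].
have := order_path_min _ hp; move=> /(_ _) /allP H.
apply: ltnW; apply: H => //; move=> b c d; exact: ltn_trans.
Qed.

Definition Eg k : {set 'I_(2^k) * 'I_(2^k)} := [set e : 'I_(2^k) * 'I_(2^k) | [exists s : 'I_k.+1, ed k e.1 e.2 s]].

Lemma EgP k (u v : 'I_(2^k)) : reflect (exists s, ed k u v s) ((u,v) \in Eg k).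
Proof.
rewrite inE; apply: (iffP existsP) => [[s hs]|[s hs]]; first by exists s.
have h : s < k.+1 by move: (hs) => /and4P [h _ _ _].
by exists (Ordinal h).
Qed.

Lemma core_walk k (a a2 b1 x vd : 'I_(2^k)) r :
  (a,b1) \in Eg k -> (a2,b1) \in Eg k -> a < a2 ->
  path (adjb (Eg k)) (inl a2) r -> inc (inr b1 :: inl a2 :: r) ->
  inr vd \in (inr b1 :: inl a2 :: r) -> b1 < x -> x <= vd -> (a, x) \in Eg k -> False.
Proof.
move=> /EgP [s h1] h2' haa hp hi hvd hbx hxv /EgP [sx hx].
move: (h2') => /EgP [s2 h2].
have hs := ed_order h1 h2 haa.
case: s h1 hs => // t h1 hs.
have hk : t < k by move: (h1) => /and4P [h _ _ _].
have c2 : a2 %/ 2^t + b1 %/ 2^t + 1 = 2^(k-t) := ed_comp h2 hs (ltnW hk).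
pose P (z : vtx (2^k) (2^k)) := match z with
  | inl u => u %/ 2^t == a2 %/ 2^t | inr v => v %/ 2^t == b1 %/ 2^t end.
have HP : forall a b c, adjb (Eg k) a b -> adjb (Eg k) b c -> ltside a c -> P a -> P b -> P c.
  case=> [u|v]; case=> [u1|v1]; case=> [u2|v2] //=.
  - move=> /EgP [s1 e1] /EgP [s3 e3] hu /eqP pu /eqP pv; apply/eqP.
    have c : u %/ 2^t + v1 %/ 2^t + 1 = 2^(k-t) by rewrite pu pv.
    have := ed_step e1 e3 hu hk c; rewrite pv; exact: eq_canc c2.
  - move=> /EgP [s1 e1] /EgP [s3 e3] hv /eqP pv /eqP pu; apply/eqP.
    rewrite ed_sym in e1; rewrite ed_sym in e3.
    have c : v %/ 2^t + u1 %/ 2^t + 1 = 2^(k-t) by rewrite pu pv; move: c2; clear; lia.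
    have := ed_step e1 e3 hv hk c; rewrite pu; exact: eq_canc2 c2.
have hall := @walk_all _ _ (Eg k) P HP r (inr b1) (inl a2) h2' hp hi (eqxx _) (eqxx _).
have /eqP pvd := allP hall _ hvd.
have hq : x %/ 2^t = b1 %/ 2^t.
  have l1 := leq_div2r (2^t) (ltnW hbx); have l2 := leq_div2r (2^t) hxv.
  rewrite pvd in l2; clear -l1 l2; lia.
exact: core_arith h1 hx hbx hq.
Qed.

Lemma mem_interior (T : eqType) (a : T) s x : x \in Defs.interior (a :: s) -> x \in s.
Proof. rewrite /Defs.interior /=; case: s => //= b s; exact: mem_take. Qed.

Lemma type1_inc k (w : seq (vtx (2^k) (2^k))) (ea ex : 'I_(2^k)) :
  is_walk (Eg k) w -> inc w -> (ea, ex) \in Eg k ->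
  forall ua vc vd v', Defs.is_min (Uvs w) ua -> Defs.is_min (Vvs w) vc -> Defs.is_max (Vvs w) vd ->
  ea = ua -> vc <= ex <= vd -> inr v' \in Defs.interior w -> v' < ex -> False.
Proof.
move=> hw hi he ua vc vd v' [hua hua'] _ [hvd _] hea /andP [_ hxd] hv' hvx.
subst ea.
case: w hw hi hv' hua hua' hvd => [//|y0 [//|y1 r]] hw hi hv' hua hua' hvd.
move: hw; rewrite /is_walk /= => /andP [h01 hp].
rewrite mem_Vvs in hvd.
case: y0 h01 hi hv' hua hua' hvd => [a|b0]; case: y1 hp => [u1|b1] hp //= h01 hi hv' hua hua' hvd.
-
  have hua_a : ua = a.
    apply: val_inj; apply/eqP; rewrite eqn_leq; apply/andP; split.
      by apply: hua'; rewrite /Uvs /= inE eqxx.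
    apply: (sorted_head (l := Uvs r)); first by case/andP: hi.
    exact: hua.
  rewrite {}hua_a in he; clear hua hua'.
  case: r hp hi hv' hvd => [|z r'] hp hi hv'; first by rewrite /Defs.interior /= in hv'.
  move=> hvd.
  case: z hp hi hv' hvd => [a2|b2] //= /andP [h12 hp] hi hv' hvd.
  have hb1v : b1 <= v'.
    apply: (sorted_head (l := Vvs (inl a2 :: r'))); first by case/andP: hi.
    have : inr v' \in [:: inr b1, inl a2 & r'].
      exact: (mem_interior hv').
    by rewrite -mem_Vvs.
  have haa : a < a2 by move: hi => /andP [/= /andP [h _] _].
  move: hvd; rewrite inE /= => hvd.
  exact: (core_walk h01 h12 haa hp (inc_tail hi) hvd (leq_ltn_trans hb1v hvx) hxd he).
-
  rename u1 into a. have hua_a : ua = a.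
    apply: val_inj; apply/eqP; rewrite eqn_leq; apply/andP; split.
      by apply: hua'; rewrite /Uvs /= inE eqxx.
    apply: (sorted_head (l := Uvs r)); first by case/andP: hi.
    exact: hua.
  rewrite {}hua_a in he; clear hua hua'.
  case: r hp hi hv' hvd => [|z [|z' r']] hp hi hv' hvd.
  + by rewrite /Defs.interior /= in hv'.
  + by move: hv'; rewrite /Defs.interior /= inE.
  case: z hp hi hv' hvd => [u2|b1] //=; case: z' => [a2|v3] //=; last by rewrite andbF.
  move=> /and3P [h01' h12 hp] hi hv' hvd.
  have hin : inr v' \in [:: inr b1, inl a2 & r'].
    have : inr v' \in [:: inl a, inr b1, inl a2 & r'].
      exact: (mem_interior hv').
    by rewrite inE.
  have hi2 := inc_tail (inc_tail hi).
  have hb1v : b1 <= v'.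
    apply: (sorted_head (l := Vvs (inl a2 :: r'))); first by case/andP: hi2.
    by rewrite (mem_Vvs [:: inr b1, inl a2 & r']).
  have hb0 : b0 < b1 by move: hi => /andP [_ /= /andP [h _]].
  have haa : a < a2 by move: hi => /andP [/= /andP [h _] _].
  have hvd' : inr vd \in [:: inr b1, inl a2 & r'].
    move: hvd; rewrite inE => /orP [/eqP [ev]|]; last by rewrite inE.
    subst vd; exfalso; move: hb0 hb1v hvx hxd; clear; lia.
  exact: (core_walk h01' h12 haa hp hi2 hvd' (leq_ltn_trans hb1v hvx) hxd he).
Qed.

Lemma Eg_sym k (u v : 'I_(2^k)) : ((u,v) \in Eg k) = ((v,u) \in Eg k).
Proof.
by apply/EgP/EgP => -[s hs]; exists s; rewrite ed_sym.
Qed.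

Definition sw m (x : vtx m m) : vtx m m :=
  match x with inl u => inr u | inr v => inl v end.

Lemma Uvs_sw m (w : seq (vtx m m)) : Uvs (map (@sw m) w) = Vvs w.
Proof. by elim: w => [|[u|v] w IH] //=; rewrite IH. Qed.
Lemma Vvs_sw m (w : seq (vtx m m)) : Vvs (map (@sw m) w) = Uvs w.
Proof. by elim: w => [|[u|v] w IH] //=; rewrite IH. Qed.

Lemma path_sw k (x : vtx (2^k) (2^k)) s :
  path (adjb (Eg k)) (sw x) (map (@sw _) s) = path (adjb (Eg k)) x s.
Proof.
elim: s x => [|y s IH] x //=; rewrite IH; congr andb.
by case: x => [u|v]; case: y => [u'|v'] //=; rewrite Eg_sym.
Qed.

Lemma sw_inj m : injective (@sw m).
Proof. by case=> [u|v] [u'|v'] //= [->]. Qed.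

Lemma interior_sw m (w : seq (vtx m m)) : Defs.interior (map (@sw m) w) = map (@sw m) (Defs.interior w).
Proof. by rewrite /Defs.interior size_map -map_take behead_map. Qed.

Lemma main_inc k (w : seq (vtx (2^k) (2^k))) (e : 'I_(2^k) * 'I_(2^k)) :
  is_walk (Eg k) w -> inc w -> e \in Eg k -> back_edge w e -> False.
Proof.
case: e => ea ex hw hi he [[ua [vc [vd [v' [h1 [h2 [h3 [h4 [h5 [h6 h7]]]]]]]]]]|].
  exact: (type1_inc hw hi he h1 h2 h3 h4 h5 h6 h7).
move=> [vc [ua [ub [u' [h1 [h2 [h3 [h4 [h5 [h6 h7]]]]]]]]]].
have hw' : is_walk (Eg k) (map (@sw _) w).
  by case: w hw {h1 h2 h3 h6 hi} => [|x s] //=; rewrite size_map path_sw.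
have hi' : inc (map (@sw _) w) by rewrite /inc Uvs_sw Vvs_sw andbC.
have he' : (ex, ea) \in Eg k by rewrite Eg_sym.
apply: (type1_inc hw' hi' he' (ua := vc) (vc := ua) (vd := ub) (v' := u')).
- by rewrite Uvs_sw.
- by rewrite Vvs_sw.
- by rewrite Vvs_sw.
- by [].
- by [].
- by rewrite interior_sw; apply/mapP; exists (inl u').
- by [].
Qed.

Lemma pmap_rev (A B : Type) (f : A -> option B) s : pmap f (rev s) = rev (pmap f s).
Proof.
elim: s => [|x s IH] //; rewrite rev_cons -cats1 pmap_cat IH /=.
by case: (f x) => [y|] /=; rewrite ?cats0 // rev_cons cats1.
Qed.

Lemma Uvs_rev p q (w : seq (vtx p q)) : Uvs (rev w) = rev (Uvs w).
Proof. exact: pmap_rev. Qed.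
Lemma Vvs_rev p q (w : seq (vtx p q)) : Vvs (rev w) = rev (Vvs w).
Proof. exact: pmap_rev. Qed.

Lemma interior_cr (T : Type) (a b : T) m : Defs.interior (a :: rcons m b) = m.
Proof. by rewrite /Defs.interior /= size_rcons /= -cats1 take_size_cat. Qed.

Lemma interior_rev (T : Type) (w : seq T) : Defs.interior (rev w) = rev (Defs.interior w).
Proof.
case: w => [|a s] //; case/lastP: s => [|m b] //.
by rewrite rev_cons rev_rcons rcons_cons interior_cr interior_cr.
Qed.

Lemma is_min_rev n (s : seq 'I_n) x : Defs.is_min (rev s) x -> Defs.is_min s x.
Proof. by case=> h1 h2; split; [rewrite -mem_rev | move=> y hy; apply: h2; rewrite mem_rev]. Qed.
Lemma is_max_rev n (s : seq 'I_n) x : Defs.is_max (rev s) x -> Defs.is_max s x.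
Proof. by case=> h1 h2; split; [rewrite -mem_rev | move=> y hy; apply: h2; rewrite mem_rev]. Qed.
Lemma is_min_rev' n (s : seq 'I_n) x : Defs.is_min s x -> Defs.is_min (rev s) x.
Proof. by move=> h; apply: is_min_rev; rewrite revK. Qed.
Lemma is_max_rev' n (s : seq 'I_n) x : Defs.is_max s x -> Defs.is_max (rev s) x.
Proof. by move=> h; apply: is_max_rev; rewrite revK. Qed.

Lemma adjb_sym p q (E : {set 'I_p * 'I_q}) x y : adjb E x y = adjb E y x.
Proof. by case: x => [u|v]; case: y. Qed.

Lemma is_walk_rev p q (E : {set 'I_p * 'I_q}) w : is_walk E w -> is_walk E (rev w).
Proof.
case: w => [|x s] //= /andP [hs hp].
rewrite lastI rev_rcons /= size_rev size_belast hs /=.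
rewrite rev_path in hp *. rewrite (eq_path (e' := adjb E)) //.
move=> a b /=; exact: adjb_sym.
Qed.

Lemma back_edge_rev p q (w : seq (vtx p q)) e : back_edge w e -> back_edge (rev w) e.
Proof.
rewrite /back_edge Uvs_rev Vvs_rev interior_rev.
case=> [[ua [vc [vd [v' [h1 [h2 [h3 [h4 [h5 [h6 h7]]]]]]]]]]|[vc [ua [ub [u' [h1 [h2 [h3 [h4 [h5 [h6 h7]]]]]]]]]]].
- left; exists ua, vc, vd, v'.
  split; first exact: is_min_rev'. split; first exact: is_min_rev'.
  split; first exact: is_max_rev'. do 3 (split => //). by rewrite mem_rev.
- right; exists vc, ua, ub, u'.
  split; first exact: is_min_rev'. split; first exact: is_min_rev'.
  split; first exact: is_max_rev'. do 3 (split => //). by rewrite mem_rev.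
Qed.

Lemma Eg_prbg k : PRBG (Eg k).
Proof.
move=> w hw hf e he hb.
case/orP: hf => hf.
  exact: (main_inc hw hf he hb).
apply: (main_inc (is_walk_rev hw) _ he (back_edge_rev hb)).
by rewrite /inc Uvs_rev Vvs_rev !rev_sorted.
Qed.

Definition fu i y := (y %/ 2^i) * 2^i.+1 + y %% 2^i.
Definition fv k i y := (2^(k - i.+1) - 1 - y %/ 2^i) * 2^i.+1 + y %% 2^i.

Lemma mod_lt i y : y %% 2^i < 2^i.+1.
Proof. rewrite expnS; have := ltn_pmod y (expn2_gt0 i); move: (y %% 2^i) (2^i) => a b; lia. Qed.

Lemma fu_div i y : fu i y %/ 2^i.+1 = y %/ 2^i.
Proof.
rewrite /fu divnMDl ?expn2_gt0 // (@divn_small (y %% 2^i)) ?addn0 //.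
exact: mod_lt.
Qed.
Lemma fu_mod i y : fu i y %% 2^i.+1 = y %% 2^i.
Proof.
rewrite /fu modnMDl modn_small //.
exact: mod_lt.
Qed.
Lemma fv_div k i y : fv k i y %/ 2^i.+1 = 2^(k - i.+1) - 1 - y %/ 2^i.
Proof.
rewrite /fv divnMDl ?expn2_gt0 // (@divn_small (y %% 2^i)) ?addn0 //.
exact: mod_lt.
Qed.
Lemma fv_mod k i y : fv k i y %% 2^i.+1 = y %% 2^i.
Proof.
rewrite /fv modnMDl modn_small //.
exact: mod_lt.
Qed.

Lemma ed_f k i y : i < k -> y < 2^k.-1 -> ed k (fu i y) (fv k i y) i.+1.
Proof.
move=> hik hy.
have ha : y %/ 2^i < 2^(k - i.+1).
  rewrite ltn_divLR ?expn2_gt0 // -expnD.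
  have -> : k - i.+1 + i = k.-1 by lia.
  exact: hy.
have hr := ltn_pmod y (expn2_gt0 i).
apply/and4P; split.
- exact: hik.
- rewrite fu_mod expnS; move: hr; clear; lia.
- by rewrite fu_mod fv_mod.
- rewrite fu_div fv_div; apply/eqP; move: ha; clear; lia.
Qed.

Lemma fu_lt k (z : 'I_k * 'I_(2^k.-1)) : fu z.1 z.2 < 2^k.
Proof. exact: (ed_lt (ed_f (ltn_ord z.1) (ltn_ord z.2))). Qed.
Lemma fv_lt k (z : 'I_k * 'I_(2^k.-1)) : fv k z.1 z.2 < 2^k.
Proof. have h := ed_f (ltn_ord z.1) (ltn_ord z.2); rewrite ed_sym in h; exact: (ed_lt h). Qed.

Definition fE k (z : 'I_k * 'I_(2^k.-1)) : 'I_(2^k) * 'I_(2^k) :=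
  (Ordinal (fu_lt z), Ordinal (fv_lt z)).

Lemma fE_inj k : injective (@fE k).
Proof.
move=> [i y] [i' y'] [] /= hu hv.
have h1 := ed_f (ltn_ord i) (ltn_ord y); have h2 := ed_f (ltn_ord i') (ltn_ord y').
rewrite hu hv in h1.
have [ei] : i.+1 = i'.+1 by exact: (ed_suniq h1 h2).
have ei' : i = i' by apply: val_inj.
subst i'; congr pair; apply: val_inj => /=.
rewrite (divn_eq y (2^i)) (divn_eq y' (2^i)) -fu_div -fu_mod -(fu_div i y') -(fu_mod i y') hu.
by [].
Qed.

Lemma card_Eg k : k * 2^k.-1 <= #|Eg k|.
Proof.
have : #|[set fE z | z in [set: 'I_k * 'I_(2^k.-1)]]| = k * 2^k.-1.
  by rewrite card_imset; [rewrite cardsT card_prod !card_ord | exact: fE_inj].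
move=> <-; apply: subset_leq_card; apply/subsetP => e /imsetP [z _ ->].
apply/EgP; exists z.1.+1; exact: (ed_f (ltn_ord z.1) (ltn_ord z.2)).
Qed.



Lemma card_nat k : (1 <= k)%N -> (k.+1 * 2^k.+1 <= 8 * #|Eg k|)%N.
Proof.
move=> hk.
have e2 : (2^k.+1 = 4 * 2^k.-1)%N.
  by rewrite -(expnD 2 2); congr expn; lia.
rewrite e2; apply: (@leq_trans (8 * (k * 2^k.-1))); last by rewrite leq_mul2l card_Eg orbT.
rewrite mulnA mulnA; apply: leq_mul => //; lia.
Qed.




Lemma pattern p q (E : {set 'I_p * 'I_q}) : PRBG E ->
  forall (u1 u : 'I_p) (v w1 x : 'I_q),
  u1 < u -> v < w1 -> w1 <= x ->
  (u1,v) \in E -> (u1,w1) \in E -> (u,v) \in E -> (u,x) \in E -> False.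
Proof.
move=> HE u1 u v w1 x hu hvw hwx e1 e2 e3 e4.
apply: (HE [:: inl u1; inr v; inl u; inr x] _ _ _ e2).
- by rewrite /is_walk /= e1 e3 e4.
- rewrite /forward /Uvs /Vvs /= hu (leq_trans hvw hwx) //.
left; exists u1, v, x, v; split; [|split; [|split; [|split; [|split]]]].
- split; first by rewrite inE eqxx.
  by move=> y; rewrite !inE => /orP[/eqP->|/eqP->] //; apply: ltnW.
- split; first by rewrite inE eqxx.
  move=> y; rewrite !inE => /orP[/eqP->|/eqP->] //; apply: ltnW; exact: (leq_trans hvw hwx).
- split; first by rewrite !inE eqxx orbT.
  move=> y; rewrite !inE => /orP[/eqP->|/eqP->] //; apply: ltnW; exact: (leq_trans hvw hwx).
- by [].
- by rewrite /= (ltnW hvw) hwx.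
- by rewrite /interior /= inE eqxx; split.
Qed.

Definition nxt p q (E : {set 'I_p * 'I_q}) (u : 'I_p) (v : 'I_q) : option 'I_q :=
  [pick w | ((u,w) \in E) && (v < w) &&
            [forall x : 'I_q, ((u,x) \in E) && (v < x) ==> (w <= x)]].

Lemma nxtS p q (E : {set 'I_p * 'I_q}) u v w : nxt E u v = Some w ->
  [/\ (u,w) \in E, v < w & forall x, (u,x) \in E -> v < x -> w <= x].
Proof.
rewrite /nxt; case: pickP => // y /andP[/andP[h1 h2] /forallP h3] [<-].
by split => // x hx hvx; have := h3 x; rewrite hx hvx.
Qed.

Lemma nxtN p q (E : {set 'I_p * 'I_q}) u v : nxt E u v = None ->
  forall x, (u,x) \in E -> x <= v.
Proof.
rewrite /nxt; case: pickP => // H _ x hx; rewrite leqNgt; apply/negP => hvx.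
have Px : ((u,x) \in E) && (v < x) by rewrite hx hvx.
case: (@arg_minnP _ x (fun y : 'I_q => ((u,y) \in E) && (v < y)) (fun y : 'I_q => nat_of_ord y) Px) => w /andP[hw1 hw2] hmin.
have := H w; rewrite hw1 hw2 /=; move/negbT/negP; apply.
by apply/forallP => y; apply/implyP => hy; apply: hmin.
Qed.

Definition lev p q (E : {set 'I_p * 'I_q}) u v : nat :=
  if nxt E u v is Some w then trunc_log 2 (w - v) else 0.

Definition top p q (E : {set 'I_p * 'I_q}) (u : 'I_p) (v : 'I_q) : bool :=
  [forall u' : 'I_p, (u' < u) ==> ~~ [&& (u',v) \in E, nxt E u' v != None & lev E u' v == lev E u v]].

Definition phi p q (E : {set 'I_p * 'I_q}) (e : 'I_p * 'I_q) :
   'I_p + ('I_p + 'I_q) * 'I_(trunc_log 2 q).+1 :=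
  match nxt E e.1 e.2 with
  | None => inl e.1
  | Some _ => inr (if top E e.1 e.2 then inr e.2 else inl e.1, inord (lev E e.1 e.2))
  end.

Lemma lev_lt p q (E : {set 'I_p * 'I_q}) u v : lev E u v < (trunc_log 2 q).+1.
Proof.
rewrite /lev; case: (nxt E u v) => [w|] //; rewrite ltnS; apply: leq_trunc_log.
have := ltn_ord w; lia.
Qed.

Lemma nontop p q (E : {set 'I_p * 'I_q}) : PRBG E -> forall u (v v' : 'I_q) w w',
  (u,v) \in E -> (u,v') \in E -> v < v' -> nxt E u v = Some w -> nxt E u v' = Some w' ->
  top E u v = false -> lev E u v = lev E u v' -> False.
Proof.
move=> HE u v v' w w' hv hv' hvv' hn hn' /negbT ht hl.
move: ht; rewrite /top negb_forall => /existsP [u1]; rewrite negb_imply negbK.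
case/andP => hu1 /and3P [hu1v]; case hn1: (nxt E u1 v) => [w1|] // _ /eqP hl1.
have [hw hvw hmin] := nxtS hn; have [hw' hvw' _] := nxtS hn'; have [hw1 hvw1 _] := nxtS hn1.
have hwv' := hmin _ hv' hvv'.
move: hl hl1; rewrite /lev hn hn' hn1 => hl hl1.
set l := trunc_log 2 (w - v) in hl hl1.
have b1 := trunc_log_bounds (isT : 1 < 2) (_ : 0 < w - v).
have b2 := trunc_log_bounds (isT : 1 < 2) (_ : 0 < w' - v').
have b3 := trunc_log_bounds (isT : 1 < 2) (_ : 0 < w1 - v).
have {b1}/andP[b1 _] := b1 ltac:(lia).
have {b2}/andP[b2 _] := b2 ltac:(lia).
have {b3}/andP[_ b3] := b3 ltac:(lia).
rewrite -hl in b2; rewrite hl1 in b3; rewrite -/l in b1.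
rewrite expnS in b3.
apply: (pattern HE hu1 hvw1 _ hu1v hw1 hv hw'). lia.
Qed.

Lemma phi_inj p q (E : {set 'I_p * 'I_q}) : PRBG E -> {in E &, injective (phi E)}.
Proof.
move=> HE [u v] [u' v'] He He'; rewrite /phi /=.
case Hn: (nxt E u v) => [w|]; case Hn': (nxt E u' v') => [w'|] //; last first.
  move=> [eu]; subst u'; congr pair; apply: val_inj; apply/eqP; rewrite /= eqn_leq.
  by rewrite (nxtN Hn He') (nxtN Hn' He).
case Ht: (top E u v); case Ht': (top E u' v') => //= -[] e1 e2;
  move: (congr1 val e2); rewrite /= !inordK ?lev_lt // => el.
- subst v'; congr pair.
  case: (ltngtP u u') => // h.
    by move/forallP: Ht' => /(_ u); rewrite h He Hn el eqxx.
  by move/forallP: Ht => /(_ u'); rewrite h He' Hn' el eqxx.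
  exact: val_inj.
- subst u'; congr pair.
  case: (ltngtP v v') => // h; first by case: (nontop HE He He' h Hn Hn' Ht el).
  by case: (nontop HE He' He h Hn' Hn Ht' (esym el)).
  exact: val_inj.
Qed.

Lemma card_bound p q (E : {set 'I_p * 'I_q}) : PRBG E ->
  #|E| <= p + (p + q) * (trunc_log 2 q).+1.
Proof.
move=> HE; rewrite -(card_in_imset (phi_inj HE)).
apply: leq_trans (max_card _) _.
by rewrite card_sum card_prod card_sum !card_ord.
Qed.

Open Scope R_scope.

Lemma INR_expn2 T : INR (2 ^ T) = (pow 2 T).
Proof.
elim: T => [|T IH] //=; rewrite expnS mulnE mult_INR IH /=; lra.
Qed.

Lemma INR_le_log2 T n : (0 < n)%N -> (2 ^ T <= n)%N -> (INR T <= log2 (INR n)).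
Proof.
move=> hn hT.
have h2 : (0 < ln 2) by rewrite -ln_1; apply: ln_increasing; lra.
have hle : ((pow 2 T) <= INR n) by rewrite -INR_expn2; apply: le_INR; apply/leP.
have hpos : (0 < (pow 2 T)) by apply: pow_lt; lra.
have h : ln (pow 2 T) <= ln (INR n).
  case: (Rle_lt_or_eq_dec _ _ hle) => [hl|->]; last lra.
  by apply: Rlt_le; apply: ln_increasing.
rewrite ln_pow in h; last lra.
 rewrite /log2; apply (Rmult_le_reg_r (ln 2)) => //.
rewrite /Rdiv Rmult_assoc Rinv_l; lra.
Qed.

Lemma upper_real p q (E : {set 'I_p * 'I_q}) : PRBG E -> (1 <= p + q)%N ->
  (INR #|E| <= INR (p + q) * log2 (INR (p + q)) + 2 * INR (p + q)).
Proof.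
move=> HE hn.
set T := trunc_log 2 q.
have hc : (#|E| <= (p + q) * T + 2 * (p + q))%N.
  apply: leq_trans (card_bound HE) _; rewrite -/T; lia.
have hT : (2 ^ T <= p + q)%N.
  case: (posnP q) => hq.
    rewrite /T hq trunc_log0 expn0; lia.
  apply: leq_trans (trunc_logP (isT : (1 < 2)%N) hq) _; lia.
have hl := INR_le_log2 hn hT.
have hn0 : (0 <= INR (p + q)) by apply: pos_INR.
apply: Rle_trans (le_INR _ _ (leP hc)) _.
rewrite plus_INR !mult_INR /=.
have := Rmult_le_compat_l _ _ _ hn0 hl. lra.
Qed.



Lemma lower_real k : (1 <= k)%N ->
  1/8 * (INR (2^k + 2^k) * log2 (INR (2^k + 2^k))) <= INR #|Eg k|.
Proof.
move=> hk.
have e : (2^k + 2^k = 2^k.+1)%N by rewrite expnS mul2n addnn.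
rewrite e.
have h2 : 0 < ln 2 by rewrite -ln_1; apply: ln_increasing; lra.
have hl : log2 (INR (2^k.+1)) = INR k.+1.
  rewrite INR_expn2 /log2 ln_pow; last lra.
  field; lra.
rewrite hl.
have := le_INR _ _ (leP (card_nat hk)); rewrite !mult_INR INR_expn2.
have -> : INR 8 = 8 by simpl; lra.
move=> h; rewrite (Rmult_comm (pow 2 k.+1)).
move: h; move: (INR k.+1 * pow 2 k.+1) => X; lra.
Qed.

Theorem theorem1 :
  (exists (C : R) (N0 : nat),
     forall (p q : nat) (E : {set 'I_p * 'I_q}),
       (N0 <= p + q)%N -> PRBG E ->
       Rle (INR #|E|)
           (Rplus (Rmult (INR (p + q)) (log2 (INR (p + q)))) (Rmult C (INR (p + q)))))
  /\
  (exists c : R, Rlt 0 c /\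
     forall N : nat, exists (p q : nat) (E : {set 'I_p * 'I_q}),
       [/\ (N <= p + q)%N, PRBG E &
           Rle (Rmult c (Rmult (INR (p + q)) (log2 (INR (p + q))))) (INR #|E|)]).
Proof.
split.
  exists 2, 1%N => p q E hn HE.
  have := upper_real HE hn; lra.
exists (1/8); split; first lra.
move=> N; exists (2^N.+1)%N, (2^N.+1)%N, (Eg N.+1); split.
- have := ltn_expl N.+1 (isT : (1 < 2)%N); move: (2 ^ N.+1)%N => X; lia.
- exact: Eg_prbg.
- exact: lower_real.
Qed.
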